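(* For any online learning algorithm with prior knowledge of the horizon $T$, the delay $\tau$ and a number $\bar V\ge V^{\tau+1}_T$, there exists a sequence of linear losses $f_t(x)=\langle g_t,x\rangle$ such that, if the feedback is subject to constant delay $\tau$ (the feedback $g_t$ becomes available only after $\tau$ further rounds), the regret $\sum_{t=1}^T\langle g_t,x_t-p\rangle$ of the algorithm on this sequence with respect to some vector $p$ with $\|p-x_1\|\le1$ is $\Omega(\sqrt{\tau\bar V})$.
   Context: Online linear optimization in a Euclidean space (unconstrained), where $x_t$ denotes the point played at round $t$ and $x_1$ the initial point. Convention $g_t=0$ for $t\le0$. The $(\tau+1)$-variation is $V^{\tau+1}_T=\sum_{t=1}^T\|g_t-g_{t-\tau-1}\|^2$. *)

(* Defs.v *)
From HB Require Import structures.
From mathcomp Require Import all_boot all_order all_algebra.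
From mathcomp Require Import reals.
Set Implicit Arguments. Unset Strict Implicit. Unset Printing Implicit Defensive.
Import Order.TTheory GRing.Theory Num.Theory.
Local Open Scope ring_scope.

Definition dotv (R : realType) (d : nat) (u v : 'rV[R]_d) : R :=
  \sum_(i < d) u ord0 i * v ord0 i.
Definition enorm (R : realType) (d : nat) (v : 'rV[R]_d) : R :=
  Num.sqrt (dotv v v).

(* gradient at round t (t >= 1), with the convention g_t = 0 for t <= 0:
   gback g k t = g_{t-k} *)
Definition gback (R : realType) (d : nat) (g : nat -> 'rV[R]_d) (k t : nat)
  : 'rV[R]_d := if (t <= k)%N then 0 else g (t - k)%N.

Definition variation (R : realType) (d : nat) (g : nat -> 'rV[R]_d)
  (tau T : nat) : R :=
  \sum_(1 <= t < T.+1) enorm (g t - gback g tau.+1 t) ^+ 2.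

(* A deterministic online algorithm: at round t it receives the list of
   feedback available so far and outputs x_t. *)
Definition algorithm (R : realType) (d : nat) :=
  nat -> seq 'rV[R]_d -> 'rV[R]_d.

(* Point played at round t under constant delay tau: the feedback g_s is
   available only from round s + tau + 1 on, so at round t the learner
   knows exactly g_1, ..., g_{t - tau - 1}. *)
Definition play_delayed (R : realType) (d : nat) (A : algorithm R d)
  (g : nat -> 'rV[R]_d) (tau t : nat) : 'rV[R]_d :=
  A t [seq g s | s <- iota 1 (t - tau.+1)].

Definition regret_delayed (R : realType) (d : nat) (A : algorithm R d)
  (g : nat -> 'rV[R]_d) (tau T : nat) (p : 'rV[R]_d) : R :=
  \sum_(1 <= t < T.+1) dotv (g t) (play_delayed A g tau t - p).

(* Main.v *)
Require Import Defs.
From HB Require Import structures.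
From mathcomp Require Import all_boot all_order all_algebra.
From mathcomp Require Import reals.
From mathcomp Require Import zify ring lra.
Import Order.TTheory GRing.Theory Num.Theory.
Local Open Scope ring_scope.

Lemma dotvZl (R : realType) (d : nat) (k : R) (u w : 'rV[R]_d) :
  dotv (k *: u) w = k * dotv u w.
Proof. rewrite /dotv mulr_sumr; apply: eq_bigr => i _; by rewrite mxE mulrA. Qed.

Lemma dotvZr (R : realType) (d : nat) (k : R) (u w : 'rV[R]_d) :
  dotv u (k *: w) = k * dotv u w.
Proof. rewrite /dotv mulr_sumr; apply: eq_bigr => i _; by rewrite mxE mulrCA. Qed.

Lemma dotvDr (R : realType) (d : nat) (u w1 w2 : 'rV[R]_d) :
  dotv u (w1 + w2) = dotv u w1 + dotv u w2.
Proof. rewrite /dotv -big_split; apply: eq_bigr => i _; by rewrite mxE mulrDr. Qed.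

Lemma dote0 (R : realType) (d : nat) (i0 : 'I_d) :
  dotv (delta_mx ord0 i0 : 'rV[R]_d) (delta_mx ord0 i0) = 1.
Proof.
rewrite /dotv (bigD1 i0) //= big1 ?addr0.
  by rewrite mxE !eqxx /= mulr1.
by move=> i /negbTE Hi; rewrite mxE Hi andbF mul0r.
Qed.

Lemma ind_sum (R : realType) (lo hi n : nat) :
  \sum_(1 <= t < n.+1) (if (lo < t <= hi)%N then 1 else 0 : R) = (minn n hi - lo)%:R.
Proof.
elim: n => [|n IH]; first by rewrite big_geq // min0n sub0n.
rewrite big_nat_recr //= IH; case: ifP => H.
  have -> : (minn n.+1 hi - lo = (minn n hi - lo).+1)%N by lia.
  by rewrite natr1.
have -> : (minn n.+1 hi - lo = minn n hi - lo)%N.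
  lia.
by rewrite addr0.
Qed.

Theorem proposition6 (R : realType) :
  exists c : R, 0 < c /\
  forall (d T tau : nat) (Vbar : R), (0 < d)%N -> (tau <= T)%N -> 0 <= Vbar ->
  forall A : algorithm R d,
  exists g : nat -> 'rV[R]_d,
    variation g tau T <= Vbar /\
    exists p : 'rV[R]_d,
      enorm (p - play_delayed A g tau 1) <= 1 /\
      c * Num.sqrt (tau%:R * Vbar) <= regret_delayed A g tau T p.
Proof.
exists (1/2); split; first lra.
move=> d T tau V hd htau hV A.
pose i0 : 'I_d := Ordinal hd.
pose e0 : 'rV[R]_d := delta_mx ord0 i0.
pose x1 := A 1%N [::].
pose D := fun t => dotv e0 (A t [::] - x1).
pose S0 := \sum_(1 <= t < T.+1) (if (t <= tau)%N then D t else 0).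
pose s : R := if 0 <= S0 then 1 else -1.
pose e := s *: e0.
pose b := Num.sqrt (tau%:R * V) / (2 * tau%:R).
have hs : s * s = 1 by rewrite /s; case: ifP => _; lra.
have he : dotv e e = 1 by rewrite /e dotvZl dotvZr dote0 mulr1 hs.
have hsS : 0 <= s * S0.
  by rewrite /s; case: ifP => H; [rewrite mul1r | rewrite mulN1r oppr_ge0; move/negbT: H; rewrite -ltNge => /ltW].
have hb : 0 <= b by rewrite /b divr_ge0 ?sqrtr_ge0 // mulr_ge0 // ler0n.
have henorm : forall k, enorm (k *: e) ^+ 2 = k ^+ 2.
  move=> k; rewrite /enorm dotvZl dotvZr he mulr1 sqr_sqrtr -?expr2 //.
  exact: sqr_ge0.
exists (fun t => (if (t <= tau)%N then b else 0) *: e).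
split.
  rewrite /variation.
  have -> : \sum_(1 <= t < T.+1) enorm ((fun t => (if (t <= tau)%N then b else 0) *: e) t
          - gback (fun t => (if (t <= tau)%N then b else 0) *: e) tau.+1 t) ^+ 2
      = \sum_(1 <= t < T.+1) (b ^+ 2 * ((if (0 < t <= tau)%N then 1 else 0)
             + (if (tau.+1 < t <= tau.*2.+1)%N then 1 else 0))).
    apply: eq_big_nat => t /andP[t1 _]; rewrite /gback /=.
    have [H1|H1] := leqP t tau.
      have -> : (t <= tau.+1)%N by lia.
      rewrite ?andbT t1.
      have -> : (tau.+1 < t <= tau.*2.+1)%N = false by lia.
      by rewrite subr0 henorm addr0 mulr1.
    have [H2|H2] := leqP t tau.+1.
      rewrite ?andbF.
      rewrite /=.
      by rewrite subr0 scale0r addr0 mulr0 -(scale0r e) henorm expr0n.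
    rewrite ?andbF.
    rewrite scale0r sub0r -scaleNr henorm add0r /=.
    have -> : (t - tau.+1 <= tau)%N = (t <= tau.*2.+1)%N by lia.
    by case: ifP => _; rewrite ?mulr1 ?mulr0 ?sqrrN ?expr0n.
  rewrite -big_distrr /= big_split /= !ind_sum -natrD.
  apply: (@le_trans _ _ (b ^+ 2 * (2 * tau)%:R)).
    apply: ler_wpM2l; first exact: sqr_ge0.
    rewrite ler_nat; lia.
  have [->|tpos] := posnP tau; first by rewrite muln0 mulr0.
  have tr : (0 < tau%:R :> R) by rewrite ltr0n.
  rewrite /b expr_div_n sqr_sqrtr ?mulr_ge0 ?ler0n // natrM.
  have -> : tau%:R * V / (2 * tau%:R) ^+ 2 * (2%:R * tau%:R) = V / 2.
    by field; rewrite gt_eqF.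
  lra.
exists (x1 - e); split.
  rewrite /play_delayed subSS sub0n /= -/x1 addrAC subrr add0r.
  by rewrite /enorm -scaleN1r dotvZl dotvZr he mulr1 mulN1r opprK sqrtr1.
rewrite /regret_delayed.
have -> : \sum_(1 <= t < T.+1) dotv ((fun t => (if (t <= tau)%N then b else 0) *: e) t)
      (play_delayed A (fun t => (if (t <= tau)%N then b else 0) *: e) tau t - (x1 - e))
    = \sum_(1 <= t < T.+1) (b * (s * (if (t <= tau)%N then D t else 0))
                + b * (if (0 < t <= tau)%N then 1 else 0)).
  apply: eq_big_nat => t /andP[t1 _] /=.
  have [H|H] := leqP t tau.
    rewrite ?andbT t1.
    rewrite /play_delayed.
    have -> : (t - tau.+1 = 0)%N by lia.
    rewrite /= dotvZl.
    have -> : A t [::] - (x1 - e) = (A t [::] - x1) + e.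
      by rewrite opprB addrCA addrC.
    rewrite dotvDr he /e dotvZl mulrDr mulr1.
    by [].
  rewrite ?andbF.
  by rewrite dotvZl !mul0r !mulr0 addr0.
rewrite big_split /= -!mulr_sumr ind_sum -/S0.
have -> : (minn T tau - 0 = tau)%N by lia.
apply: (@le_trans _ _ (b * tau%:R)); last by rewrite lerDr mulr_ge0.
have [->|tpos] := posnP tau; first by rewrite mul0r sqrtr0 !mulr0.
have tr : (0 < tau%:R :> R) by rewrite ltr0n.
rewrite /b.
have -> : Num.sqrt (tau%:R * V) / (2 * tau%:R) * tau%:R = 1/2 * Num.sqrt (tau%:R * V).
  by field; rewrite gt_eqF.
by [].
Qed.
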